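(* Let $N\ge M\ge 1$, let $\beta$, $a$ (with Hölder exponent $\theta_1$), $f_0$ (with Hölder exponent $\theta_2$) and $dq_0$ be as in the context, with $dq_0$ satisfying condition (B) and $\int_{|z|<1}|z|^{\gamma}dq_0+\int_{|z|\ge1}|z|^{\gamma-1}dq_0<\infty$ ($\gamma=2$ in case (I), $\gamma=1$ in case (II)). For $\lambda>0$ let $v_\lambda$ be the periodic viscosity solution of (I) $\lambda v_\lambda-a(y)\int_{\mathbb{R}^M}[v_\lambda(y+\beta(z))-v_\lambda(y)-\langle\nabla v_\lambda(y),\beta(z)\rangle]dq_0(z)-f_0(y)=0$ in $\mathbb{T}^N$ (resp. (II), the same without the gradient term), and set $m_\lambda=\lambda v_\lambda$. Then: (i) there is a constant $M_0>0$ such that $\|m_\lambda\|_{L^\infty}\le M_0$ for all $\lambda\in(0,1)$; (ii) for every $\theta\in(0,\min\{\theta_1,\theta_2\})$ there is a constant $C_\theta>0$ such that $|m_\lambda(y)-m_\lambda(y')|\le C_\theta|y-y'|^{\theta}$ for all $y,y'\in\mathbb{T}^N$ and all $\lambda\in(0,1)$. The constants $M_0$ and $C_\theta$ do not depend on $\lambda\in(0,1)$.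
   Context: $\mathbb{T}^N=[0,1]^N$; functions on it are $\mathbb{Z}^N$-periodic on $\mathbb{R}^N$. $\beta:\mathbb{R}^M\to\mathbb{R}^N$ continuous, $\beta(cz)=c\beta(z)$ for $c>0$, $|\beta(z)|\le B_1|z|$. $a$ continuous, periodic, $a\ge a_0>0$, $|a(y)-a(y')|\le L|y-y'|^{\theta_1}$, $\theta_1\in(0,1]$. $f_0$ periodic with $|f_0(y)-f_0(y')|\le L|y-y'|^{\theta_2}$, $\theta_2\in(0,1]$. $dq_0$ positive Radon measure on $\mathbb{R}^M$. Condition (B): with $S_0=\mathrm{supp}(dq_0)$, for any $y,y'\in\mathbb{T}^N$ there exist $y_1=y,\dots,y_m=y'$ such that for any $\varepsilon_i>0$ there are $J_i\subset S_0$ with $y_i+\beta(z)\in B_{\varepsilon_i}(y_{i+1})$ (mod $\mathbb{Z}^N$) for $z\in J_i$ and $\int_{J_i}dq_0>0$. Viscosity solutions are understood via test functions: at a global max (resp. min) of $u-\phi$, $\phi\in C^2$, $u(\hat y)=\phi(\hat y)$, the equation holds with ''$\le$'' (resp. ''$\ge$'') when $\nabla u(\hat y)$ is replaced by $\nabla\phi(\hat y)$ in the (integrable) integrand. *)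

(* Defs.v *)
From HB Require Import structures.
From mathcomp Require Import all_boot all_order all_algebra.
From mathcomp Require Import all_classical all_reals all_analysis.
Set Implicit Arguments. Unset Strict Implicit. Unset Printing Implicit Defensive.
Import Order.TTheory GRing.Theory Num.Theory.
Import numFieldNormedType.Exports.
Local Open Scope classical_set_scope.
Local Open Scope ring_scope.

Definition enorm (R : realType) (n : nat) (x : 'rV[R]_n) : R :=
  Num.sqrt (\sum_(i < n) x ord0 i ^+ 2).
Definition edot (R : realType) (n : nat) (x y : 'rV[R]_n) : R :=
  \sum_(i < n) x ord0 i * y ord0 i.

Definition BorelR (R : realType) (M : nat) := g_sigma_algebraType (@open 'rV[R]_M).

Definition intvec (R : realType) (n : nat) (k : 'I_n -> int) : 'rV[R]_n :=
  \row_i (k i)%:~R.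

Definition Zperiodic (R : realType) (n : nat) (u : 'rV[R]_n -> R) : Prop :=
  forall (y : 'rV[R]_n) (k : 'I_n -> int), u (y + intvec R k) = u y.

(* the unit cube [0,1]^n (the torus T^n) *)
Definition cube (R : realType) (n : nat) : set 'rV[R]_n :=
  [set y | forall i, 0 <= y ord0 i <= 1].

Definition hoelder_cond (R : realType) (n : nat) (u : 'rV[R]_n -> R) (L th : R) : Prop :=
  forall y y', `|u y - u y'| <= L * (enorm (y - y')) `^ th.

Definition evec (R : realType) (n : nat) (i : 'I_n) : 'rV[R]_n :=
  \row_j (if j == i then 1 else 0).

Definition partial (R : realType) (n : nat) (i : 'I_n) (f : 'rV[R]_n -> R)
  (x : 'rV[R]_n) : R := 'D_(evec R i) f x.

Definition grad (R : realType) (n : nat) (f : 'rV[R]_n -> R) (x : 'rV[R]_n)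
  : 'rV[R]_n := \row_i partial i f x.

Definition C2 (R : realType) (n : nat) (f : 'rV[R]_n -> R) : Prop :=
  [/\ continuous f,
      forall i x, derivable f x (evec R i),
      forall i, continuous (partial i f),
      forall i j x, derivable (partial i f) x (evec R j)
    & forall i j, continuous (partial j (partial i f))].

Definition radon (R : realType) (M : nat)
  (q : {measure set (BorelR R M) -> \bar R}) : Prop :=
  forall K : set 'rV[R]_M, compact K -> (q K < +oo)%E.

Definition msupport (R : realType) (M : nat)
  (q : {measure set (BorelR R M) -> \bar R}) : set 'rV[R]_M :=
  [set z | forall U : set 'rV[R]_M, open U -> U z -> (0 < q U)%E].

Definition near_mod (R : realType) (n : nat) (x y : 'rV[R]_n) (eps : R) : Prop :=
  exists k : 'I_n -> int, enorm (x + intvec R k - y) < eps.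

Definition condB (R : realType) (N M : nat) (beta : 'rV[R]_M -> 'rV[R]_N)
  (q : {measure set (BorelR R M) -> \bar R}) : Prop :=
  forall y y' : 'rV[R]_N, cube y -> cube y' ->
  exists (m : nat) (ys : nat -> 'rV[R]_N),
    (1 <= m)%N /\ ys 1%N = y /\ ys m = y' /\
    (forall i, (1 <= i < m)%N ->
       forall eps : R, 0 < eps ->
       exists J : set (BorelR R M),
         [/\ measurable J, J `<=` msupport q, (0 < q J)%E &
             forall z, J z -> near_mod (ys i + beta z) (ys i.+1) eps]).

(* The nonlocal integral, with the gradient of u replaced by the vector p:
   int [u(y+beta z) - u(y) - <p, beta z>] dq(z)   (case (I), grad_term = true)
   int [u(y+beta z) - u(y)] dq(z)                 (case (II), grad_term = false)
   as an extended-real Lebesgue integral. *)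
Definition nonlocal (R : realType) (N M : nat) (grad_term : bool)
  (beta : 'rV[R]_M -> 'rV[R]_N) (q : {measure set (BorelR R M) -> \bar R})
  (u : 'rV[R]_N -> R) (y p : 'rV[R]_N) : \bar R :=
  (\int[q]_(z in [set: BorelR R M])
     (u (y + beta z) - u y - (if grad_term then edot p (beta z) else 0))%:E)%E.

Definition visc_sub (R : realType) (N M : nat) (grad_term : bool)
  (beta : 'rV[R]_M -> 'rV[R]_N) (q : {measure set (BorelR R M) -> \bar R})
  (a f : 'rV[R]_N -> R) (lam : R) (u : 'rV[R]_N -> R) : Prop :=
  forall (phi : 'rV[R]_N -> R) (yh : 'rV[R]_N), C2 phi ->
    (forall y, u y - phi y <= u yh - phi yh) -> u yh = phi yh ->
    ((lam * u yh)%:E - (a yh)%:E * nonlocal grad_term beta q u yh (grad phi yh)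
      - (f yh)%:E <= 0)%E.

Definition visc_super (R : realType) (N M : nat) (grad_term : bool)
  (beta : 'rV[R]_M -> 'rV[R]_N) (q : {measure set (BorelR R M) -> \bar R})
  (a f : 'rV[R]_N -> R) (lam : R) (u : 'rV[R]_N -> R) : Prop :=
  forall (phi : 'rV[R]_N -> R) (yh : 'rV[R]_N), C2 phi ->
    (forall y, u yh - phi yh <= u y - phi y) -> u yh = phi yh ->
    ((lam * u yh)%:E - (a yh)%:E * nonlocal grad_term beta q u yh (grad phi yh)
      - (f yh)%:E >= 0)%E.

Definition periodic_visc_sol (R : realType) (N M : nat) (grad_term : bool)
  (beta : 'rV[R]_M -> 'rV[R]_N) (q : {measure set (BorelR R M) -> \bar R})
  (a f : 'rV[R]_N -> R) (lam : R) (u : 'rV[R]_N -> R) : Prop :=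
  [/\ continuous u, Zperiodic u,
      visc_sub grad_term beta q a f lam u & visc_super grad_term beta q a f lam u].

(* Main.v *)
Require Import Defs.
From HB Require Import structures.
From mathcomp Require Import all_boot all_order all_algebra.
From mathcomp Require Import all_classical all_reals all_analysis.
From mathcomp Require Import ring lra.
Set Implicit Arguments. Unset Strict Implicit. Unset Printing Implicit Defensive.
Import Order.TTheory GRing.Theory Num.Theory.
Import numFieldNormedType.Exports.
Local Open Scope classical_set_scope.
Local Open Scope ring_scope.
Lemma E0 (R : realType) (c d : R) : (fun h : R => c + h * d) @ (0:R) --> c.
Proof.
suff : (fun h : R => c + h * d) @ (0:R) --> c + 0 * d by rewrite mul0r addr0.
apply: cvgD; first exact: cvg_cst.
apply: cvgM; [exact: cvg_id | exact: cvg_cst].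
Qed.
Lemma E1 (R : realType) (c d : R) : (fun h : R => c + h * d) @ (0:R)^' --> c.
Proof.
have := @E0 R c d.
exact: cvg_within_filter.
Qed.
Lemma der_poly (R : realType) n (f : 'rV[R]_n -> R) a v (c d : R) :
  (forall h : R, h != 0 -> h^-1 *: (f (h *: v + a) - f a) = c + h * d) ->
  derivable f a v /\ 'D_v f a = c.
Proof.
move=> H.
have K : (fun h : R => h^-1 *: ((f \o shift a) (h *: v) - f a)) @ (0:R)^' --> c.
  apply: cvg_trans (@E1 R c d); apply: near_eq_cvg.
  near=> h; rewrite /= H //.
  near: h; exact: nbhs_dnbhs_neq.
split; first by apply/cvg_ex; exists c.
exact: cvg_lim.
Unshelve. all: by end_near. Qed.

Definition sq (R : realType) n (w : 'rV[R]_n) : R := \sum_(i < n) w ord0 i ^+ 2.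
Definition Qf (R : realType) n (c b : R) (y0 : 'rV[R]_n) (x : 'rV[R]_n) : R :=
  c + b * sq (x - y0).

Lemma sq_shift (R : realType) n (j : 'I_n) (h : R) (w : 'rV[R]_n) :
  sq (h *: evec R j + w) = sq w + (2 * h * w ord0 j + h ^+ 2).
Proof.
rewrite /sq.
under eq_bigr => i _ do rewrite !mxE.
rewrite (eq_bigr (fun i => w ord0 i ^+ 2 + (if i == j then 2 * h * w ord0 i + h ^+ 2 else 0))); last first.
  move=> i _; case: eqP => _; rewrite ?mulr1 ?mulr0 ?add0r ?addr0 //.
  by rewrite sqrrD; ring.
by rewrite big_split /= -big_mkcond big_pred1_eq.
Qed.

Lemma cont_coord (R : realType) n (j : 'I_n) : continuous (fun x : 'rV[R]_n => x ord0 j).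
Proof. exact: coord_continuous. Qed.

Section ContOps.
Context {R : realType} {T : topologicalType}.
Lemma cont_add (f g : T -> R) : continuous f -> continuous g -> continuous (fun x => f x + g x).
Proof. by move=> cf cg x; apply: cvgD; [exact: cf|exact: cg]. Qed.
Lemma cont_sub (f g : T -> R) : continuous f -> continuous g -> continuous (fun x => f x - g x).
Proof. by move=> cf cg x; apply: cvgB; [exact: cf|exact: cg]. Qed.
Lemma cont_mul (f g : T -> R) : continuous f -> continuous g -> continuous (fun x => f x * g x).
Proof. by move=> cf cg x; apply: cvgM; [exact: cf|exact: cg]. Qed.
Lemma cont_cst (c : R) : continuous (fun _ : T => c).
Proof. by move=> x; exact: cvg_cst. Qed.
End ContOps.

Lemma cont_sq_shift (R : realType) n (y0 : 'rV[R]_n) : continuous (fun x : 'rV[R]_n => sq (x - y0)).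
Proof.
rewrite /sq.
suff H : forall s : seq 'I_n, continuous (fun x : 'rV[R]_n => \sum_(i <- s) (x - y0) ord0 i ^+ 2).
  exact: H.
elim => [|i s IH].
  under eq_fun do rewrite big_nil. exact: cont_cst.
under eq_fun do rewrite big_cons.
apply: cont_add => //.
under eq_fun do rewrite !mxE.
apply: cont_mul; apply: cont_sub; (try exact: cont_cst); exact: cont_coord.
Qed.

Lemma scaleRE (R : realType) (r s : R) : r *: s = r * s.
Proof. by []. Qed.

Lemma mxBE (R : realType) n (x y : 'rV[R]_n) j : (x - y) ord0 j = x ord0 j - y ord0 j.
Proof. by rewrite !mxE. Qed.

Lemma Qf_partial (R : realType) n (c b : R) (y0 : 'rV[R]_n) (j : 'I_n) x :
  derivable (Qf c b y0) x (evec R j) /\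
  partial j (Qf c b y0) x = 2 * b * (x ord0 j - y0 ord0 j).
Proof.
apply: (@der_poly R n _ x (evec R j) _ b) => h hn0.
rewrite /Qf -[h *: _ + x - y0]addrA sq_shift scaleRE mxBE.
by field.
Qed.

Lemma lin_partial (R : realType) n (b : R) (y0 : 'rV[R]_n) (i j : 'I_n) x :
  derivable (fun x : 'rV[R]_n => 2 * b * (x ord0 j - y0 ord0 j)) x (evec R i) /\
  partial i (fun x : 'rV[R]_n => 2 * b * (x ord0 j - y0 ord0 j)) x =
    (if j == i then 2 * b else 0).
Proof.
apply: (@der_poly R n _ x (evec R i) _ 0) => h hn0.
rewrite scaleRE !mxE; case: eqP => _; by field.
Qed.

Lemma Qf_partialE (R : realType) n (c b : R) (y0 : 'rV[R]_n) (j : 'I_n) :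
  partial j (Qf c b y0) = (fun x : 'rV[R]_n => 2 * b * (x ord0 j - y0 ord0 j)).
Proof. by apply: funext => x; case: (Qf_partial c b y0 j x). Qed.

Lemma Qf_C2 (R : realType) n (c b : R) (y0 : 'rV[R]_n) : C2 (Qf c b y0).
Proof.
split.
- apply: cont_add; first exact: cont_cst.
  apply: cont_mul; first exact: cont_cst. exact: cont_sq_shift.
- by move=> i x; case: (Qf_partial c b y0 i x).
- move=> i; rewrite Qf_partialE.
  apply: cont_mul; first exact: cont_cst.
  apply: cont_sub; [exact: cont_coord | exact: cont_cst].
- by move=> i j x; rewrite Qf_partialE; case: (lin_partial b y0 j i x).
- move=> i j; rewrite Qf_partialE.
  have -> : partial j (fun x : 'rV[R]_n => 2 * b * (x ord0 i - y0 ord0 i)) =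
    (fun _ => if i == j then 2 * b else 0).
    by apply: funext => x; case: (lin_partial b y0 j i x).
  exact: cont_cst.
Qed.

Lemma Qf_grad (R : realType) n (c b : R) (y0 : 'rV[R]_n) x :
  grad (Qf c b y0) x = (2 * b) *: (x - y0).
Proof.
apply/rowP => i; rewrite /grad mxE Qf_partialE !mxE.
by [].
Qed.
Local Open Scope ereal_scope.
Lemma integralT_le d (T : measurableType d) (R : realType) (mu : {measure set T -> \bar R})
  (f g : T -> \bar R) : (forall x, f x <= g x) ->
  \int[mu]_(x in [set: T]) f x <= \int[mu]_(x in [set: T]) g x.
Proof.
move=> fg.
rewrite /integral !patch_setT.
apply: leeB.
- apply: ereal_sup_le => _ [h hf <-]; exists h => //= x.
  apply: (le_trans (hf x)).
  rewrite !funeposE; by apply: le_max2.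
- apply: ereal_sup_le => _ [h hf <-]; exists h => //= x.
  apply: (le_trans (hf x)).
  rewrite !funenegE; by apply: le_max2; rewrite ?leeN2.
Qed.

Lemma sub_case (R : realType) (lv a f : R) (I : \bar R) : (0 < a)%R ->
  (lv%:E - a%:E * I - f%:E <= 0) -> I = +oo \/ exists i, I = i%:E /\ (lv - a * i - f <= 0)%R.
Proof.
move=> a0; case: I => [i||] H; [right; exists i; split=> //| by left|].
by move: H; rewrite gt0_muleNy ?lte_fin // oppeK addeC /= addye.
Qed.

Lemma super_case (R : realType) (lv a f : R) (I : \bar R) : (0 < a)%R ->
  (lv%:E - a%:E * I - f%:E >= 0) -> I = -oo \/ exists i, I = i%:E /\ (lv - a * i - f >= 0)%R.
Proof.
move=> a0; case: I => [i||] H; [right; exists i; split=> //| |by left].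
by move: H; rewrite gt0_muley ?lte_fin //.
Qed.
Local Close Scope ereal_scope.
Lemma to_cube (R : realType) n (y : 'rV[R]_n) : exists k, cube (y + intvec R k).
Proof.
exists (fun i => - Num.floor (y ord0 i)) => i.
rewrite !mxE intrN.
have /andP[h1 h2] := floor_itv (y ord0 i).
rewrite subr_ge0 h1 /=.
rewrite intrD in h2.
by rewrite lerBlDl ltW.
Qed.

Lemma cube_compact (R : realType) n : compact (cube (R:=R) (n:=n)).
Proof.
have -> : cube (R:=R) (n:=n) = [set v : 'rV[R]_n | forall i, `[(0:R), 1]%classic (v ord0 i)].
  apply/seteqP; split => v /= H i; have := H i; by rewrite /= in_itv.
exact: (@rV_compact R n (fun=> `[(0:R), 1]%classic) (fun=> @segment_compact R 0 1)).
Qed.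

Lemma periodic_max (R : realType) n (u : 'rV[R]_n -> R) :
  continuous u -> Zperiodic u -> exists yh, forall y, u y <= u yh.
Proof.
move=> cu pu.
have [c cA cmax] : exists2 c, c \in cube (R:=R) (n:=n) & forall t, t \in @cube R n -> u t <= u c.
  apply: EVT_max_rV.
  - exists 0 => i; by rewrite mxE lexx ler01.
  - exact: cube_compact.
  - exact: continuous_subspaceT.
exists c => y; have [k Hk] := to_cube y.
rewrite -(pu y k); apply: cmax; by rewrite inE.
Qed.

Lemma periodic_min (R : realType) n (u : 'rV[R]_n -> R) :
  continuous u -> Zperiodic u -> exists yh, forall y, u yh <= u y.
Proof.
move=> cu pu.
have [yh H] := @periodic_max R n (fun y => - u y) (fun x => cvgN (cu x)) (fun y k => congr1 -%R (pu y k)).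
by exists yh => y; rewrite -lerN2 H.
Qed.
Lemma nn (R : realType) (x : R) : 0 <= x -> x \in Num.nneg.
Proof. by rewrite qualifE. Qed.

Lemma powR_mono (R : realType) (x y th : R) : 0 <= th -> 0 <= x -> x <= y -> x `^ th <= y `^ th.
Proof.
move=> th0 x0 xy.
apply: (ge0_ler_powR th0) => //; rewrite qualifE //.
exact: le_trans xy.
Qed.

Lemma powR1 (R : realType) (x : R) : 1 `^ x = 1.
Proof. by rewrite /powR oner_eq0 ln1 mulr0 expR0. Qed.

Lemma P1 (R : realType) (x th : R) : 0 <= x -> 0 < th <= 1 -> x `^ th <= 1 + x.
Proof.
move=> x0 /andP[th0 th1].
case: (lerP x 1) => hx.
  apply: (@le_trans _ _ (1 `^ th)).
    by apply: powR_mono => //; apply: ltW.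
  by rewrite powR1 lerDl.
apply: (le_trans (ler1_powR (ltW hx) th1)); by rewrite lerDr.
Qed.

Lemma P3 (R : realType) (d th th' : R) : 0 <= d < 1 -> 0 < th <= th' -> d `^ th' <= d `^ th.
Proof.
move=> /andP[d0 d1] /andP[th0 thth].
have th'0 : 0 < th' by exact: lt_le_trans thth.
case: (eqVneq d 0) => [->|dn0].
  by rewrite !powR0 ?gt_eqF.
apply: ger_powR => //; by rewrite lt_neqAle eq_sym dn0 d0 ltW.
Qed.

Lemma P4 (R : realType) (d th : R) : 0 <= d -> 0 < th -> d `^ th < 1 -> d < 1.
Proof.
move=> d0 th0 H; rewrite ltNge; apply/negP => d1.
have : 1 `^ th <= d `^ th by apply: powR_mono => //; apply: ltW.
by rewrite powR1 => /(lt_le_trans H); rewrite ltxx.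
Qed.

Lemma P2 (R : realType) (d d0 th : R) : 0 <= d -> 0 < d0 -> 0 < th <= 1 ->
  d `^ th <= d0 `^ th + d0 `^ th / d0 ^+ 2 * d ^+ 2.
Proof.
move=> dge0 d0gt0 /andP[th0 th1].
have Hp : 0 <= d0 `^ th / d0 ^+ 2 * d ^+ 2.
  by rewrite mulr_ge0 ?divr_ge0 ?powR_ge0 ?exprn_ge0 ?sqr_ge0 //; apply: ltW.
case: (lerP d d0) => hd.
  apply: (@le_trans _ _ (d0 `^ th)); last by rewrite lerDl.
  by apply: powR_mono => //; apply: ltW.
apply: (@le_trans _ _ (d0 `^ th / d0 ^+ 2 * d ^+ 2)); last by rewrite lerDr powR_ge0.
have -> : d = d0 * (d / d0) by rewrite mulrC divfK // gt_eqF.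
have q1 : 1 <= d / d0 by rewrite ler_pdivlMr // mul1r ltW.
have d00 : 0 <= d0 by apply: ltW.
rewrite powRM ?divr_ge0 //.
rewrite exprMn mulrA divfK ?expf_neq0 ?gt_eqF //.
rewrite ler_pM2l ?powR_gt0 //.
apply: (le_trans (ler1_powR q1 th1)).
by rewrite expr2 ler_peMr // (le_trans ler01).
Qed.
Lemma sq_ge0 (R : realType) n (w : 'rV[R]_n) : 0 <= sq w.
Proof. by apply: sumr_ge0 => i _; exact: sqr_ge0. Qed.

Lemma enormE (R : realType) n (w : 'rV[R]_n) : enorm w = Num.sqrt (sq w).
Proof. by []. Qed.

Lemma enorm_ge0 (R : realType) n (w : 'rV[R]_n) : 0 <= enorm w.
Proof. exact: sqrtr_ge0. Qed.

Lemma enorm_sqr (R : realType) n (w : 'rV[R]_n) : enorm w ^+ 2 = sq w.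
Proof. by rewrite enormE sqr_sqrtr // sq_ge0. Qed.

Lemma sqN (R : realType) n (w : 'rV[R]_n) : sq (- w) = sq w.
Proof. by apply: eq_bigr => i _; rewrite mxE sqrrN. Qed.

Lemma sq_sym (R : realType) n (x y : 'rV[R]_n) : sq (x - y) = sq (y - x).
Proof. by rewrite -sqN opprB. Qed.

Lemma enorm_sym (R : realType) n (x y : 'rV[R]_n) : enorm (x - y) = enorm (y - x).
Proof. by rewrite !enormE sq_sym. Qed.

Lemma sq_term (R : realType) n (w : 'rV[R]_n) i : w ord0 i ^+ 2 <= sq w.
Proof.
rewrite /sq (bigD1 i) //= lerDl.
by apply: sumr_ge0 => j _; exact: sqr_ge0.
Qed.

Lemma enorm0 (R : realType) n (x y : 'rV[R]_n) : enorm (x - y) = 0 -> x = y.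
Proof.
move=> H; have : sq (x - y) = 0 by rewrite -enorm_sqr H expr2 mulr0.
move=> H2; apply/rowP => i.
have : (x - y) ord0 i ^+ 2 <= 0 by rewrite -H2 sq_term.
rewrite !mxE => H3.
have : (x ord0 i - y ord0 i) ^+ 2 = 0 by apply/eqP; rewrite eq_le H3 sqr_ge0.
move/eqP; rewrite sqrf_eq0 subr_eq0 => /eqP E.
exact: E.
Qed.

Lemma sq_shiftinv (R : realType) n (x y w : 'rV[R]_n) : sq ((x + w) - (y + w)) = sq (x - y).
Proof. by rewrite opprD addrACA subrr addr0. Qed.

Lemma enorm_le (R : realType) n (w : 'rV[R]_n) : enorm w <= 1 + sq w.
Proof.
rewrite enormE.
have h0 := sq_ge0 w.
rewrite -(@ger0_norm _ (1 + sq w)) ?addr_ge0 // -sqrtr_sqr.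
rewrite ler_sqrt ?sqr_ge0 //.
rewrite sqrrD expr1n.
have : 0 <= sq w ^+ 2 + sq w by rewrite addr_ge0 ?sqr_ge0.
lra.
Qed.

Lemma cube_sq (R : realType) n (y : 'rV[R]_n) : cube y -> sq y <= n%:R.
Proof.
move=> Hc; rewrite /sq.
apply: (@le_trans _ _ (\sum_(i < n) (1:R))); last by rewrite sumr_const card_ord.
apply: ler_sum => i _; have /andP[h0 h1] := Hc i.
by rewrite expr2 mulr_ile1.
Qed.

Definition PhiF (R : realType) n (u : 'rV[R]_n -> R) (lam K A B : R) (x y : 'rV[R]_n) : R :=
  lam * (u x - u y) - K * (A + B * sq (x - y)).

Lemma cont_fst (R : realType) n : continuous (fun p : 'rV[R]_n * 'rV[R]_n => p.1).
Proof. move=> p; exact: cvg_fst. Qed.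
Lemma cont_snd (R : realType) n : continuous (fun p : 'rV[R]_n * 'rV[R]_n => p.2).
Proof. move=> p; exact: cvg_snd. Qed.

Lemma cont_PhiF (R : realType) n (u : 'rV[R]_n -> R) (lam K A B : R) :
  continuous u -> continuous (fun p : 'rV[R]_n * 'rV[R]_n => PhiF u lam K A B p.1 p.2).
Proof.
move=> cu; rewrite /PhiF.
apply: cont_sub.
  apply: cont_mul; first exact: cont_cst.
  apply: cont_sub.
    move=> p; apply: (@continuous_comp _ _ _ (fun p : 'rV[R]_n * 'rV[R]_n => p.1) u); [exact: cont_fst | exact: cu].
  move=> p; apply: (@continuous_comp _ _ _ (fun p : 'rV[R]_n * 'rV[R]_n => p.2) u); [exact: cont_snd | exact: cu].
apply: cont_mul; first exact: cont_cst.
apply: cont_add; first exact: cont_cst.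
apply: cont_mul; first exact: cont_cst.
have cd : continuous (fun p : 'rV[R]_n * 'rV[R]_n => p.1 - p.2).
  move=> p; apply: cvgB; [exact: cont_fst | exact: cont_snd].
have cs : continuous (fun w : 'rV[R]_n => sq w).
  have := @cont_sq_shift R n 0.
  by under eq_fun do rewrite subr0.
move=> p; exact: (@continuous_comp _ _ _ (fun p : 'rV[R]_n * 'rV[R]_n => p.1 - p.2) (fun w => sq w) p (cd p) (cs _)).
Qed.

Lemma box_compact (R : realType) n (R0 : R) :
  compact [set v : 'rV[R]_n | forall i, `[- R0, R0]%classic (v ord0 i)].
Proof. exact: (@rV_compact R n (fun=> `[- R0, R0]%classic) (fun=> @segment_compact R _ _)). Qed.

Lemma osc_le (R : realType) n (u : 'rV[R]_n -> R) (lam Fb : R) :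
  (forall y, `|lam * u y| <= Fb) -> forall x y, lam * (u x - u y) <= 2 * Fb.
Proof.
move=> H x y; rewrite mulrBr.
have := H x; have := H y; rewrite !ler_norml => /andP[h1 h2] /andP[h3 h4].
lra.
Qed.

Lemma pair_max (R : realType) n (u : 'rV[R]_n -> R) (lam K A B Fb : R) :
  continuous u -> Zperiodic u -> 0 < K -> 0 < B -> (forall y, `|lam * u y| <= Fb) ->
  exists xh yh, forall x y, PhiF u lam K A B x y <= PhiF u lam K A B xh yh.
Proof.
move=> cu pu K0 B0 Hb.
have Fb0 : 0 <= Fb by apply: le_trans (Hb 0).
set R0 := 2 + 2 * Fb / (K * B).
set Bx := [set v : 'rV[R]_n | forall i, `[- R0, R0]%classic (v ord0 i)].
set G := fun p : 'rV[R]_n * 'rV[R]_n => PhiF u lam K A B p.1 p.2.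
have [c cS cmax] : exists2 c, c \in (@cube R n) `*` Bx & forall t, t \in (@cube R n) `*` Bx -> G t <= G c.
  apply: compact_EVT_max.
  - exists (0, 0); split => i /=; rewrite mxE.
      by rewrite lexx ler01.
    rewrite in_itv /=.
    have : 0 <= R0 by rewrite /R0 addr_ge0 // divr_ge0 ?mulr_ge0 // ltW.
    move=> h; apply/andP; split => //; by rewrite oppr_le0.
  - apply: compact_setX; [exact: cube_compact | exact: box_compact].
  - apply: continuous_subspaceT; exact: cont_PhiF.
exists c.1, c.2 => x y.
have [k Hk] := to_cube x.
have -> : PhiF u lam K A B x y = G (x + intvec R k, y + intvec R k).
  by rewrite /G /PhiF /= !pu sq_shiftinv.
case: (pselect (Bx (y + intvec R k))) => hB.
  by apply: cmax; rewrite inE.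
apply: (@le_trans _ _ (G (0, 0))); last first.
  apply: cmax; rewrite inE; split => i /=; rewrite mxE.
    by rewrite lexx ler01.
  rewrite in_itv /=.
  have : 0 <= R0 by rewrite /R0 addr_ge0 // divr_ge0 ?mulr_ge0 // ltW.
  move=> h; apply/andP; split => //; by rewrite oppr_le0.
move: hB; rewrite /Bx /= => /existsNP [i hi].
set x' := x + intvec R k; set y' := y + intvec R k.
have Hx := Hk i.
have hy : R0 < `|y' ord0 i|.
  rewrite ltNge; apply/negP => h; apply: hi; rewrite /= in_itv /=.
  by rewrite -ler_norml.
have hxy : R0 - 1 <= `|x' ord0 i - y' ord0 i|.
  move: Hx; rewrite /x' => /andP[h1 h2].
  rewrite distrC.
  apply: (@le_trans _ _ (`|y' ord0 i| - `|(x + intvec R k) ord0 i|)).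
    rewrite [`|(x + _) ord0 i|]ger0_norm //; lra.
  exact: lerB_dist.
have R01 : 1 <= R0 - 1.
  rewrite /R0; have : 0 <= 2 * Fb / (K * B) by rewrite divr_ge0 ?mulr_ge0 // ltW.
  lra.
have hsq : 2 * Fb / (K * B) <= sq (x' - y').
  apply: (@le_trans _ _ ((x' - y') ord0 i ^+ 2)); last exact: sq_term.
  rewrite mxBE.
  have -> : (x' ord0 i - y' ord0 i) ^+ 2 = `|x' ord0 i - y' ord0 i| ^+ 2.
    by rewrite -normrX ger0_norm // sqr_ge0.
  apply: (@le_trans _ _ (R0 - 1)); first by rewrite /R0; lra.
  apply: (@le_trans _ _ ((R0 - 1) ^+ 2)).
    by rewrite expr2 ler_peMl // (le_trans ler01).
  rewrite !expr2; apply: ler_pM; lra.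
rewrite /G /PhiF /= !subrr.
have Ho := osc_le Hb x' y'.
have KB0 : 0 < K * B by rewrite mulr_gt0.
have : 2 * Fb <= K * B * sq (x' - y').
  by rewrite [K * B * _]mulrC -ler_pdivrMr.
move=> h.
have -> : sq (0 : 'rV[R]_n) = 0 by rewrite /sq big1 // => j _; rewrite mxE expr0n.

have : K * (A + B * sq (x' - y')) = K * A + K * B * sq (x' - y') by rewrite mulrDr mulrA.
lra.
Qed.

Lemma hoelder_bounded (R : realType) n (f : 'rV[R]_n -> R) (L th : R) :
  Zperiodic f -> 0 < th <= 1 -> hoelder_cond f L th ->
  exists Fb, 0 <= Fb /\ forall y, `|f y| <= Fb.
Proof.
move=> pf th01 hf.
exists (`|f 0| + `|L| * (2 + n%:R)); split.
  by rewrite addr_ge0 // mulr_ge0 // addr_ge0.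
move=> y; have [k Hk] := to_cube y.
rewrite -(pf y k); set y' := y + intvec R k.
have e1 : `|f y'| <= `|f 0| + `|f y' - f 0|.
  by rewrite -[X in `|X|](subrK (f 0)) addrC (le_trans (ler_normD _ _)) // addrC.
apply: (le_trans e1); rewrite lerD2l.
apply: (le_trans (hf y' 0)).
have p0 := powR_ge0 (enorm (y' - 0)) th.
apply: (@le_trans _ _ (`|L| * enorm (y' - 0) `^ th)).
  by apply: ler_wpM2r => //; exact: ler_norm.
apply: ler_wpM2l => //.
apply: (le_trans (P1 (enorm_ge0 _) th01)).
have := enorm_le (y' - 0); rewrite subr0 => h.
have := cube_sq Hk; rewrite -/y' => h2.
lra.
Qed.

Lemma edot0 (R : realType) n (w : 'rV[R]_n) : edot 0 w = 0.
Proof. by rewrite /edot big1 // => i _; rewrite mxE mul0r. Qed.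

Lemma contra_real (R : realType) (lam ux uy ax ay fx fy ix iy a0 Fb L K q p1 p2 : R) :
  0 < a0 -> a0 <= ax -> a0 <= ay -> 0 <= Fb ->
  `|fx| <= Fb -> `|fy| <= Fb -> `|lam * ux| <= Fb -> `|lam * uy| <= Fb ->
  lam * ux - ax * ix - fx <= 0 -> 0 <= lam * uy - ay * iy - fy -> ix <= iy ->
  `|ax - ay| <= L * p1 -> `|fx - fy| <= L * p2 -> 0 <= q -> p1 <= q -> p2 <= q ->
  0 <= p1 -> 0 <= p2 ->
  K * q < lam * ux - lam * uy -> `|L| * (2 * Fb / a0) + `|L| <= K -> False.
Proof.
move=> a00 hax hay Fb0 hfx hfy hux huy Sx Sy ixy ha hf q0 p1q p2q p10 p20 hK hKb.
have ax0 : 0 < ax by exact: lt_le_trans hax.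
have ay0 : 0 < ay by exact: lt_le_trans hay.
move: hfx hfy hux huy; rewrite !ler_norml => /andP[f1 f2] /andP[f3 f4] /andP[u1 u2] /andP[u3 u4].
have e1 : ay * iy <= 2 * Fb by lra.
have e2 : ax * ix <= ax * iy by rewrite ler_pM2l.
have e3 : - (2 * Fb) <= ax * iy by lra.
have hiy : a0 * `|iy| <= 2 * Fb.
  case: (lerP 0 iy) => hi.
    rewrite ger0_norm //; apply: le_trans e1; exact: ler_wpM2r.
  rewrite ltr0_norm //.
  have : a0 * - iy <= ax * - iy by rewrite ler_pM2r ?oppr_gt0.
  rewrite !mulrN; lra.
have Ib : `|iy| <= 2 * Fb / a0 by rewrite ler_pdivlMr // mulrC.
have main : lam * ux - lam * uy <= (ax - ay) * iy + (fx - fy).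
  rewrite mulrBl; lra.
have t1 : (ax - ay) * iy <= `|ax - ay| * `|iy|.
  by rewrite -normrM ler_norm.
have t2 : `|ax - ay| * `|iy| <= (L * p1) * (2 * Fb / a0).
  by apply: ler_pM => //.
have L1 : L * p1 <= `|L| * q.
  apply: (@le_trans _ _ (`|L| * p1)); first by apply: ler_wpM2r => //; exact: ler_norm.
  by apply: ler_wpM2l.
have L2 : L * p2 <= `|L| * q.
  apply: (@le_trans _ _ (`|L| * p2)); first by apply: ler_wpM2r => //; exact: ler_norm.
  by apply: ler_wpM2l.
have Ib0 : 0 <= 2 * Fb / a0 by rewrite divr_ge0 ?mulr_ge0 // ltW.
have t3 : (L * p1) * (2 * Fb / a0) <= (`|L| * q) * (2 * Fb / a0) by rewrite ler_wpM2r.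
have t4 : fx - fy <= `|fx - fy| by exact: ler_norm.
have t5 : (`|L| * (2 * Fb / a0) + `|L|) * q <= K * q by rewrite ler_wpM2r.
have t6 : (`|L| * q) * (2 * Fb / a0) + `|L| * q = (`|L| * (2 * Fb / a0) + `|L|) * q by ring.
lra.
Qed.

Lemma le_K (R : realType) (x y : R) : 0 <= x -> y <= 2 * x + y + 1.
Proof. move=> h; lra. Qed.

Section Sols.
Variables (R : realType) (N M : nat) (g : bool) (beta : 'rV[R]_M -> 'rV[R]_N)
  (q : {measure set (BorelR R M) -> \bar R}) (a f : 'rV[R]_N -> R) (lam : R) (u : 'rV[R]_N -> R).

Lemma sub_Q : visc_sub g beta q a f lam u -> forall c b y0 yh,
  (forall y, u y - Qf c b y0 y <= u yh - Qf c b y0 yh) -> u yh = Qf c b y0 yh ->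
  ((lam * u yh)%:E - (a yh)%:E * nonlocal g beta q u yh ((2 * b) *: (yh - y0)) - (f yh)%:E <= 0)%E.
Proof. by move=> S c b y0 yh H1 H2; rewrite -(Qf_grad c); apply: S => //; exact: Qf_C2. Qed.

Lemma super_Q : visc_super g beta q a f lam u -> forall c b y0 yh,
  (forall y, u yh - Qf c b y0 yh <= u y - Qf c b y0 y) -> u yh = Qf c b y0 yh ->
  ((lam * u yh)%:E - (a yh)%:E * nonlocal g beta q u yh ((2 * b) *: (yh - y0)) - (f yh)%:E >= 0)%E.
Proof. by move=> S c b y0 yh H1 H2; rewrite -(Qf_grad c); apply: S => //; exact: Qf_C2. Qed.

Lemma nonlocal_le (y1 y2 p : 'rV[R]_N) :
  (forall w, u (y1 + w) - u y1 <= u (y2 + w) - u y2) ->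
  (nonlocal g beta q u y1 p <= nonlocal g beta q u y2 p)%E.
Proof.
move=> H; rewrite /nonlocal; apply: integralT_le => z.
rewrite lee_fin; have := H (beta z); lra.
Qed.

Lemma nonlocal_max (yh : 'rV[R]_N) : (forall y, u y <= u yh) ->
  (nonlocal g beta q u yh 0 <= 0)%E.
Proof.
move=> H; rewrite /nonlocal.
rewrite -(integral0 q [set: BorelR R M]).
apply: integralT_le => z; rewrite lee_fin edot0 if_same subr0 subr_le0; exact: H.
Qed.

Lemma nonlocal_min (yh : 'rV[R]_N) : (forall y, u yh <= u y) ->
  (0 <= nonlocal g beta q u yh 0)%E.
Proof.
move=> H; rewrite /nonlocal.
rewrite -(integral0 q [set: BorelR R M]).
apply: integralT_le => z; rewrite lee_fin edot0 if_same subr0 subr_ge0; exact: H.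
Qed.

Lemma part1 (a0 Fb : R) : 0 < a0 -> (forall y, a0 <= a y) -> 0 < lam ->
  (forall y, `|f y| <= Fb) -> periodic_visc_sol g beta q a f lam u ->
  forall y, `|lam * u y| <= Fb.
Proof.
move=> a00 aa0 lam0 fb [cu pu Sub Sup].
have apos y : 0 < a y by exact: lt_le_trans (aa0 y).
have up : forall y, lam * u y <= Fb.
  have [yh Hmax] := periodic_max cu pu.
  have H := @sub_Q Sub (u yh) 0 yh yh.
  rewrite mulr0 scale0r in H.
  have Hn := nonlocal_max Hmax.
  have H1 : forall y, u y - Qf (u yh) 0 yh y <= u yh - Qf (u yh) 0 yh yh.
    by move=> y; rewrite /Qf !mul0r !addr0 lerD2r.
  have H2 : u yh = Qf (u yh) 0 yh yh by rewrite /Qf mul0r addr0.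
  have := H H1 H2.
  case/(sub_case (apos yh)) => [Hi|[i [Hi Hi2]]].
    by move: Hn; rewrite Hi.
  move: Hn; rewrite Hi lee_fin => i0.
  move=> y; apply: (@le_trans _ _ (lam * u yh)).
    by rewrite ler_pM2l.
  have := fb yh; rewrite ler_norml => /andP[_ h].
  have : 0 <= a yh * - i by rewrite mulr_ge0 ?oppr_ge0 // ltW.
  rewrite mulrN; lra.
have lo : forall y, - Fb <= lam * u y.
  have [yh Hmin] := periodic_min cu pu.
  have H := @super_Q Sup (u yh) 0 yh yh.
  rewrite mulr0 scale0r in H.
  have Hn := nonlocal_min Hmin.
  have H1 : forall y, u yh - Qf (u yh) 0 yh yh <= u y - Qf (u yh) 0 yh y.
    by move=> y; rewrite /Qf !mul0r !addr0 lerD2r.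
  have H2 : u yh = Qf (u yh) 0 yh yh by rewrite /Qf mul0r addr0.
  have := H H1 H2.
  case/(super_case (apos yh)) => [Hi|[i [Hi Hi2]]].
    by move: Hn; rewrite Hi.
  move: Hn; rewrite Hi lee_fin => i0.
  move=> y; apply: (@le_trans _ _ (lam * u yh)); last by rewrite ler_pM2l.
  have := fb yh; rewrite ler_norml => /andP[h _].
  have : 0 <= a yh * i by rewrite mulr_ge0 // ltW.
  lra.
by move=> y; rewrite ler_norml up lo.
Qed.

Lemma part2 (a0 Fb L th1 th2 th : R) : 0 < a0 -> (forall y, a0 <= a y) -> 0 < lam -> 0 <= Fb ->
  (forall y, `|f y| <= Fb) -> periodic_visc_sol g beta q a f lam u ->
  hoelder_cond a L th1 -> hoelder_cond f L th2 ->
  0 < th -> th <= th1 -> th <= th2 -> th <= 1 ->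
  forall x0 y0, lam * u x0 - lam * u y0 <=
    2 * (2 * Fb + (`|L| * (2 * Fb / a0) + `|L|) + 1) * enorm (x0 - y0) `^ th.
Proof.
move=> a00 aa0 lam0 Fb0 fb sol ha hf th0 th1h th2h th1' x0 y0.
have ub := part1 a00 aa0 lam0 fb sol.
case: sol => cu pu Sub Sup.
have apos y : 0 < a y by exact: lt_le_trans (aa0 y).
set K := 2 * Fb + (`|L| * (2 * Fb / a0) + `|L|) + 1.
have Ib0 : 0 <= 2 * Fb / a0 by rewrite divr_ge0 ?mulr_ge0 //; exact: ltW.
have KL0 : 0 <= `|L| * (2 * Fb / a0) + `|L| by rewrite addr_ge0 // mulr_ge0.
have K0 : 0 < K by rewrite /K; lra.
set d0 := enorm (x0 - y0).
have d0ge : 0 <= d0 by exact: enorm_ge0.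
case: (eqVneq d0 0) => hd.
  have -> : x0 = y0 by apply: enorm0.
  by rewrite subrr mulr_ge0 // ?powR_ge0 // mulr_ge0 // ltW.
have d0pos : 0 < d0 by rewrite lt_neqAle eq_sym hd d0ge.
set A := d0 `^ th; set B := A / d0 ^+ 2.
have A0 : 0 < A by exact: powR_gt0.
have B0 : 0 < B by rewrite divr_gt0 // exprn_gt0.
have [xh [yh Hmax]] := @pair_max R N u lam K A B Fb cu pu K0 B0 ub.
case: (lerP (PhiF u lam K A B xh yh) 0) => hP.
  have := le_trans (Hmax x0 y0) hP; rewrite /PhiF.
  have -> : B * sq (x0 - y0) = A.
    by rewrite -enorm_sqr -/d0 /B divfK // expf_neq0.
  rewrite mulrBr; lra.
exfalso.
have [bb [bb0 Elb]] : exists bb, 0 < bb /\ lam * bb = K * B.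
  exists (K * B / lam); split; first by rewrite divr_gt0 // mulr_gt0.
  by rewrite mulrC divfK // gt_eqF.
set cx := u xh - bb * sq (xh - yh).
have H1 : forall x, u x - Qf cx bb yh x <= u xh - Qf cx bb yh xh.
  move=> x; have := Hmax x yh; rewrite /PhiF /Qf => h.
  rewrite -(ler_pM2l lam0).
  have E1 : lam * (bb * sq (x - yh)) = K * (B * sq (x - yh)) by rewrite [LHS]mulrA [RHS]mulrA Elb.
  have E2 : lam * (bb * sq (xh - yh)) = K * (B * sq (xh - yh)) by rewrite [LHS]mulrA [RHS]mulrA Elb.
  lra.
have H2 : u xh = Qf cx bb yh xh by rewrite /Qf /cx subrK.
have Sx := sub_Q Sub H1 H2.
set cy := u yh + bb * sq (yh - xh).
have H3 : forall y, u yh - Qf cy (- bb) xh yh <= u y - Qf cy (- bb) xh y.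
  move=> y; have := Hmax xh y; rewrite /PhiF /Qf (sq_sym xh y) (sq_sym xh yh) => h.
  rewrite -(ler_pM2l lam0).
  have E1 : lam * (bb * sq (y - xh)) = K * (B * sq (y - xh)) by rewrite [LHS]mulrA [RHS]mulrA Elb.
  have E2 : lam * (bb * sq (yh - xh)) = K * (B * sq (yh - xh)) by rewrite [LHS]mulrA [RHS]mulrA Elb.
  lra.
have H4 : u yh = Qf cy (- bb) xh yh by rewrite /Qf /cy mulNr addrK.
have Sy := super_Q Sup H3 H4.
have Ep : (2 * - bb) *: (yh - xh) = (2 * bb) *: (xh - yh).
  by rewrite mulrN scaleNr -scalerN opprB.
rewrite Ep in Sy.
have Ile : (nonlocal g beta q u xh ((2 * bb) *: (xh - yh)) <=
            nonlocal g beta q u yh ((2 * bb) *: (xh - yh)))%E.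
  apply: nonlocal_le => w.
  have := Hmax (xh + w) (yh + w); rewrite /PhiF sq_shiftinv => h.
  have : lam * (u (xh + w) - u (yh + w)) <= lam * (u xh - u yh) by lra.
  rewrite ler_pM2l // => h2; lra.
case/(sub_case (apos xh)): Sx => [Hx|[ix [Hx Sx]]].
  move: Ile; rewrite Hx.
  by case/(super_case (apos yh)): Sy => [->|[iy [-> _]]].
case/(super_case (apos yh)): Sy => [Hy|[iy [Hy Sy]]].
  by move: Ile; rewrite Hx Hy.
move: Ile; rewrite Hx Hy lee_fin => ixy.
set d := enorm (xh - yh).
have dge : 0 <= d by exact: enorm_ge0.
have hq : d `^ th <= A + B * sq (xh - yh).
  rewrite -enorm_sqr -/d; apply: P2 => //; by rewrite th0.
have Ho := osc_le ub xh yh.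
have hKq : K * d `^ th < lam * u xh - lam * u yh.
  rewrite -mulrBr; apply: le_lt_trans (_ : K * (A + B * sq (xh - yh)) < _).
    by rewrite ler_pM2l.
  move: hP; rewrite /PhiF; lra.
have q1 : d `^ th < 1.
  have : K * d `^ th < K * 1.
    have KK : 2 * Fb < K by rewrite /K; lra.
    move: Ho; rewrite mulrBr mulr1 => Ho; lra.
  by rewrite ltr_pM2l.
have d1 : d < 1 by apply: P4 q1.
have p1 : d `^ th1 <= d `^ th by apply: P3; rewrite ?dge ?d1 ?th0.
have p2 : d `^ th2 <= d `^ th by apply: P3; rewrite ?dge ?d1 ?th0.
have KLle : `|L| * (2 * Fb / a0) + `|L| <= K by rewrite /K; apply: le_K.
exact: (contra_real a00 (aa0 xh) (aa0 yh) Fb0 (fb xh) (fb yh) (ub xh) (ub yh) Sx Sy ixy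
  (ha xh yh) (hf xh yh) (powR_ge0 _ _) p1 p2 (powR_ge0 _ _) (powR_ge0 _ _) hKq KLle).
Qed.
End Sols.

Unset Implicit Arguments.

Theorem lemma3p2 (R : realType) (N M : nat) (grad_term : bool)
  (beta : 'rV[R]_M -> 'rV[R]_N) (a f0 : 'rV[R]_N -> R)
  (q0 : {measure set (BorelR R M) -> \bar R})
  (B1 a0 L th1 th2 : R) (v : R -> 'rV[R]_N -> R) :
  (1 <= M)%N -> (M <= N)%N ->
  continuous beta ->
  (forall (c : R) z, 0 < c -> beta (c *: z) = c *: beta z) ->
  (forall z, enorm (beta z) <= B1 * enorm z) ->
  continuous a -> Zperiodic a -> 0 < a0 -> (forall y, a0 <= a y) ->
  0 < th1 <= 1 -> hoelder_cond a L th1 ->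
  Zperiodic f0 -> 0 < th2 <= 1 -> hoelder_cond f0 L th2 ->
  radon q0 -> condB beta q0 ->
  let gamma := if grad_term then 2%N else 1%N in
  (\int[q0]_(z in [set z | (enorm z < 1)%R]) (enorm z ^+ gamma)%R%:E
   + \int[q0]_(z in [set z | (1 <= enorm z)%R]) (enorm z ^+ gamma.-1)%R%:E < +oo)%E ->
  (forall lam : R, 0 < lam -> periodic_visc_sol grad_term beta q0 a f0 lam (v lam)) ->
  (exists M0 : R, 0 < M0 /\
     forall lam : R, 0 < lam < 1 -> forall y, `|lam * v lam y| <= M0) /\
  (forall th : R, 0 < th < Num.min th1 th2 ->
     exists C : R, 0 < C /\
       forall lam : R, 0 < lam < 1 -> forall y y', cube y -> cube y' ->
         `|lam * v lam y - lam * v lam y'| <= C * (enorm (y - y')) `^ th).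
Proof.
move=> _ _ _ _ _ _ _ a00 aa0 /andP[th10 th11] ha pf /andP[th20 th21] hf _ _ gamma _ sol.
have [Fb [Fb0 fb]] := hoelder_bounded pf (introT andP (conj th20 th21)) hf.
split.
  exists (Fb + 1); split; first by rewrite ltr_pwDr.
  move=> lam /andP[lam0 _] y.
  apply: (le_trans (part1 a00 aa0 lam0 fb (sol lam lam0) y)).
  by rewrite lerDl.
move=> th /andP[th0]; rewrite lt_min => /andP[tt1 tt2].
set K := 2 * Fb + (`|L| * (2 * Fb / a0) + `|L|) + 1.
have Ib0 : 0 <= 2 * Fb / a0 by rewrite divr_ge0 ?mulr_ge0 //; exact: ltW.
have KL0 : 0 <= `|L| * (2 * Fb / a0) + `|L| by rewrite addr_ge0 // mulr_ge0.
exists (2 * K); split.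
  by rewrite mulr_gt0 // /K ltr_pwDr // addr_ge0 // mulr_ge0.
move=> lam /andP[lam0 _] y y' _ _.
have th1' : th <= 1 by apply: le_trans (ltW tt1) th11.
have P y1 y2 := part2 a00 aa0 lam0 Fb0 fb (sol lam lam0) ha hf th0 (ltW tt1) (ltW tt2) th1' y1 y2.
rewrite ler_norml; apply/andP; split; last exact: P.
rewrite enorm_sym; have := P y' y; rewrite -/K; lra.
Qed.
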